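(* Let $\mathbb{F}_2$ be the free group on $T_1,T_2$, $X=\{-1,1\}^{\mathbb{F}_2}$ with the product of uniform measures $m$ and the shift action $(gx)^h=x^{hg}$, and let $X'=\{x\in X: gx\ne x \text{ for all } g\ne e\}$. Let $g_1,\dots,g_4$ be $T_1T_2^{-1},T_1^{-1}T_2,T_2T_1^{-1},T_2^{-1}T_1$ and let $g_5,\dots,g_{16}$ be the twelve distinct elements of reduced length $4$ obtained as products of two of $g_1,\dots,g_4$. Let $B_1,\dots,B_{17}$ be Borel sets partitioning $X'$ such that for every $i\le 16$ and $x\in X'$, the points $x$ and $g_ix$ lie in different sets, and let $\kappa(x)=j$ for $x\in B_j$. For $x\in X$ let $t(x)=\{T_1x,T_2x\}$ if $x^e=1$ and $t(x)=\{T_1^{-1}x,T_2^{-1}x\}$ if $x^e=-1$, and for $x\in X'$ let $L(x)=\kappa(t(x))$. Define the secondary graph on $X$: distinct $x,y\in X'$ are adjacent iff $t(x)\cap t(y)\ne\emptyset$, and points of $X\setminus X'$ have no neighbours. Then the colouring rule ''$c(x)\in L(x)$ and $c(x)\ne c(y)$ whenever $x,y$ are adjacent'', with colour set $\{1,\dots,17\}$ (proper list colouring of the secondary graph), is paradoxical.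
   Context: A colouring $c:X\to\{1,\dots,17\}$ satisfies the rule if the requirement holds at $m$-almost every $x$. The rule is paradoxical if (a) some colouring (not necessarily measurable) satisfies it, and (b) there is no pair $(\mu,c)$ where $\mu$ is a finitely additive $\mathbb{F}_2$-invariant probability measure on an $\mathbb{F}_2$-invariant algebra $\mathcal{B}$ containing all $m$-measurable sets and extending $m$, and $c$ is a colouring satisfying the rule all of whose colour classes lie in $\mathcal{B}$. *)

(* Defs.v *)
From Stdlib Require List.
From HB Require Import structures.
From mathcomp Require Import all_boot all_order all_algebra.
From mathcomp Require Import all_classical all_reals all_analysis.
Set Implicit Arguments. Unset Strict Implicit. Unset Printing Implicit Defensive.
Import Order.TTheory GRing.Theory Num.Theory.
Local Open Scope classical_set_scope.
Local Open Scope ring_scope.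

(* a letter (i, s): generator T1 if i = false, T2 if i = true;
   s = false means the generator itself, s = true its inverse *)
Definition letter := (bool * bool)%type.
Definition linv (a : letter) : letter := (a.1, ~~ a.2).

Fixpoint reduced (w : seq letter) : bool :=
  match w with
  | a :: ((b :: _) as w') => (b != linv a) && reduced w'
  | _ => true
  end.

Definition push (a : letter) (w : seq letter) : seq letter :=
  match w with
  | b :: w' => if b == linv a then w' else a :: w
  | [::] => [:: a]
  end.

Definition red (w : seq letter) : seq letter := foldr push [::] w.

Lemma reduced_tail a w : reduced (a :: w) -> reduced w.
Proof. by case: w => [|b w] //= /andP[]. Qed.

Lemma push_reduced a w : reduced w -> reduced (push a w).
Proof.
case: w => [|b w] //= Hw; case: ifP => Hb; first exact: reduced_tail Hw.
by rewrite /= Hb Hw.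
Qed.

Lemma red_reduced w : reduced (red w).
Proof. by elim: w => [|a w IH] //=; exact: push_reduced. Qed.

Definition F2 := {w : seq letter | reduced w}.

Definition F2word (g : F2) : seq letter := proj1_sig g.
Definition F2len (g : F2) : nat := size (F2word g).

Definition F2mk (w : seq letter) : F2 := exist _ (red w) (red_reduced w).
Definition F2one : F2 := F2mk [::].
Definition F2mul (g h : F2) : F2 := F2mk (F2word g ++ F2word h).
Definition F2inv (g : F2) : F2 := F2mk (rev (map linv (F2word g))).
Definition T1 : F2 := F2mk [:: (false, false)].
Definition T2 : F2 := F2mk [:: (true, false)].

(* ---------- The space X = {-1,1}^F2 (true <-> 1, false <-> -1) ---------- *)
Definition X := F2 -> bool.

Definition act (g : F2) (x : X) : X := fun h => x (F2mul h g).

Definition Xfree : set X := [set x | forall g : F2, g <> F2one -> act g x <> x].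

Definition cyl : set (set X) := [set A | exists (h : F2) (b : bool), A = [set x | x h = b]].
Definition Xm := g_sigma_algebraType cyl.

(* m is the product of the uniform measures on {-1,1}: every finite cylinder
   fixing the values at |s| distinct coordinates has measure 2^-|s| *)
Definition is_uniform_product (R : realType) (m : set Xm -> \bar R) : Prop :=
  forall (s : seq F2) (v : F2 -> bool), List.NoDup s ->
    m [set x : Xm | forall h, List.In h s -> x h = v h] = ((2%:R ^- size s : R)%:E).

Definition g4 (i : 'I_4) : F2 :=
  match val i with
  | 0 => F2mul T1 (F2inv T2)
  | 1 => F2mul (F2inv T1) T2
  | 2 => F2mul T2 (F2inv T1)
  | _ => F2mul (F2inv T2) T1
  end.

Definition G16 : set F2 :=
  [set g | (exists i, g = g4 i) \/
           (exists i j, g = F2mul (g4 i) (g4 j) /\ F2len g = 4%N)].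

Definition tset (x : X) : set X :=
  if x F2one then [set act T1 x; act T2 x]
  else [set act (F2inv T1) x; act (F2inv T2) x].

Definition Ladj (kappa : X -> 'I_17) (x : X) : set 'I_17 := kappa @` tset x.

Definition sec_adj (x y : X) : Prop :=
  Xfree x /\ Xfree y /\ x <> y /\ tset x `&` tset y !=set0.

(* the colouring requirement at x (colours 1..17 encoded as 'I_17) *)
Definition rule_at (kappa : X -> 'I_17) (c : X -> 'I_17) (x : X) : Prop :=
  (Xfree x -> c x \in Ladj kappa x) /\ (forall y, sec_adj x y -> c x <> c y).

Definition satisfies (R : realType) (m : set Xm -> \bar R)
  (kappa : X -> 'I_17) (c : X -> 'I_17) : Prop :=
  m.-negligible [set x : Xm | ~ rule_at kappa c x].

(* m-measurable sets (completion) *)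
Definition symdiff (A B : set X) : set X := (A `\` B) `|` (B `\` A).
Definition m_measurable (R : realType) (m : set Xm -> \bar R) (A : set X) : Prop :=
  exists B : set Xm, measurable B /\ m.-negligible (symdiff A B).

Definition image_act (g : F2) (A : set X) : set X := act g @` A.

Definition good_extension (R : realType) (m : set Xm -> \bar R)
  (Balg : set (set X)) (mu : set X -> R) : Prop :=
  Balg setT /\
      (forall A, Balg A -> Balg (~` A)) /\
      (forall A B, Balg A -> Balg B -> Balg (A `|` B)) /\
      (forall g A, Balg A -> Balg (image_act g A)) /\
      (forall A, m_measurable m A -> Balg A) /\
      (forall A, Balg A -> 0 <= mu A) /\
      mu setT = 1 /\
      (forall A B, Balg A -> Balg B -> A `&` B = set0 -> mu (A `|` B) = mu A + mu B) /\
      (forall g A, Balg A -> mu (image_act g A) = mu A) /\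
      (forall A (B : set Xm), measurable B -> m.-negligible (symdiff A B) ->
                      (mu A)%:E = m B).

Definition paradoxical (R : realType) (m : set Xm -> \bar R) (kappa : X -> 'I_17) : Prop :=
  (exists c : X -> 'I_17, satisfies m kappa c) /\
  ~ (exists (Balg : set (set X)) (mu : set X -> R) (c : X -> 'I_17),
        good_extension m Balg mu /\ satisfies m kappa c /\
        (forall j : 'I_17, Balg (c @^-1` [set j]))).

(* Main.v *)
Require Import Defs.
From HB Require Import structures.
From mathcomp Require Import all_boot all_order all_algebra.
From mathcomp Require Import all_classical all_reals all_analysis.
Local Open Scope classical_set_scope.
Local Open Scope ring_scope.
Set Implicit Arguments. Unset Strict Implicit. Unset Printing Implicit Defensive.
Import Order.TTheory GRing.Theory Num.Theory.
HB.instance Definition _ := Equality.copy F2 {w : seq letter | reduced w}.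

Lemma linvK a : linv (linv a) = a.
Proof. by case: a => a b; rewrite /linv /= negbK. Qed.

Lemma linv_neq a : (linv a == a) = false.
Proof. by case: a => a [] /=; rewrite /linv /= xpair_eqE eqxx /=. Qed.

Lemma red_id w : reduced w -> red w = w.
Proof.
elim: w => [|a w IH] //= Hw.
rewrite IH; last exact: reduced_tail Hw.
case: w Hw {IH} => [|b w] //= /andP[Hb _].
by rewrite (negbTE Hb).
Qed.

Lemma push_cancel a t : reduced t -> push a (push (linv a) t) = t.
Proof.
case: t => [|b t] /=; first by rewrite /= eqxx.
case: ifP => [/eqP Hb|Hb].
  rewrite linvK in Hb; subst b.
  case: t => [|c t] //= /andP[Hc _]. by rewrite (negbTE Hc).
by move=> _; rewrite /push eqxx.
Qed.

Lemma foldr_push_reduced r u : reduced r -> reduced (foldr push r u).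
Proof. by elim: u => [|a u IH] //= Hr; apply: push_reduced; apply: IH. Qed.

Lemma foldr_push_push r a s : reduced r ->
  foldr push r (push a s) = push a (foldr push r s).
Proof.
move=> Hr; case: s => [|b s] //=.
case: ifP => [/eqP ->|//].
by rewrite push_cancel //; apply: foldr_push_reduced.
Qed.

Lemma foldr_red r u : reduced r -> foldr push r (red u) = foldr push r u.
Proof.
move=> Hr; elim: u => [|a u IH] //=.
by rewrite foldr_push_push // IH.
Qed.

Lemma red_cat u v : red (u ++ v) = foldr push (red v) u.
Proof. by rewrite /red foldr_cat. Qed.

Lemma red_catl u v : red (red u ++ v) = red (u ++ v).
Proof. by rewrite !red_cat foldr_red // red_reduced. Qed.

Lemma red_catr u v : red (u ++ red v) = red (u ++ v).
Proof. by rewrite !red_cat red_id // red_reduced. Qed.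

Lemma F2_eq (g h : F2) : F2word g = F2word h -> g = h.
Proof.
case: g => w p; case: h => w' p' /= E; subst w'.
by rewrite (eq_irrelevance p p').
Qed.

Lemma F2mulE g h : F2word (F2mul g h) = red (F2word g ++ F2word h).
Proof. by []. Qed.

Lemma F2reduced g : reduced (F2word g).
Proof. by case: g. Qed.

Lemma F2mulA a b c : F2mul (F2mul a b) c = F2mul a (F2mul b c).
Proof.
apply: F2_eq; rewrite !F2mulE red_catl red_catr catA //.
Qed.

Lemma F2mul1g g : F2mul F2one g = g.
Proof. by apply: F2_eq; rewrite F2mulE /= red_id // F2reduced. Qed.

Lemma F2mulg1 g : F2mul g F2one = g.
Proof. by apply: F2_eq; rewrite F2mulE /= cats0 red_id // F2reduced. Qed.

Lemma red_inv w : red (w ++ rev (map linv w)) = [::].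
Proof.
elim: w => [|a w IH] //=.
rewrite rev_cons -cats1 catA -red_catl IH /=.
by rewrite eqxx.
Qed.

Lemma F2mulV g : F2mul g (F2inv g) = F2one.
Proof. by apply: F2_eq; rewrite F2mulE /= red_catr red_inv. Qed.

Lemma invwK w : rev (map linv (rev (map linv w))) = w.
Proof. by rewrite map_rev revK -map_comp (eq_map linvK) map_id. Qed.

Lemma F2Vmul g : F2mul (F2inv g) g = F2one.
Proof.
apply: F2_eq; rewrite F2mulE /= red_catl.
rewrite -{2}(invwK (F2word g)). by rewrite red_inv.
Qed.

Lemma actA a b x : act a (act b x) = act (F2mul a b) x.
Proof. by apply: funext => h; rewrite /act F2mulA. Qed.

Lemma act1 x : act F2one x = x.
Proof. by apply: funext => h; rewrite /act F2mulg1. Qed.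

Lemma actK a x : act (F2inv a) (act a x) = x.
Proof. by rewrite actA F2Vmul act1. Qed.

Lemma actVK a x : act a (act (F2inv a) x) = x.
Proof. by rewrite actA F2mulV act1. Qed.

Lemma xfree_uniq r a b : Xfree r -> act a r = act b r -> a = b.
Proof.
move=> Hr E.
have E' : act (F2mul (F2inv b) a) r = r by rewrite -actA E actK.
have H1 : F2mul (F2inv b) a = F2one.
  by apply: contrapT => H; exact: (Hr _ H E').
by rewrite -[a]F2mul1g -(F2mulV b) F2mulA H1 F2mulg1.
Qed.

Lemma xfree_act a x : Xfree x -> Xfree (act a x).
Proof.
move=> Hx g Hg E.
rewrite actA in E.
have := xfree_uniq Hx E => H.
apply: Hg.
by rewrite -[g]F2mulg1 -(F2mulV a) -F2mulA H F2mulV.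
Qed.

Definition gen (s b : bool) : F2 :=
  if s then (if b then T2 else T1) else (if b then F2inv T2 else F2inv T1).
Definition ords4 : seq 'I_4 :=
  [:: @Ordinal 4 0 erefl; @Ordinal 4 1 erefl; @Ordinal 4 2 erefl; @Ordinal 4 3 erefl].
Definition G16b (h : F2) : bool :=
  has (fun i => h == g4 i) ords4 ||
  has (fun i => has (fun j => (h == F2mul (g4 i) (g4 j)) && (F2len h == 4%N)) ords4) ords4.
Lemma G16bP h : G16b h -> G16 h.
Proof.
case/orP => [/hasP [i _ /eqP ->]|/hasP [i _ /hasP [j _ /andP [/eqP E /eqP L]]]].
  by left; exists i.
by right; exists i, j; split.
Qed.
Definition hof sx sy bP bP1 bQ bQ1 :=
  F2mul (F2mul (gen sx bP1) (F2inv (gen sx bP))) (F2mul (gen sy bQ) (F2inv (gen sy bQ1))).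
Lemma check : forall sx sy bP bP1 bQ bQ1, (hof sx sy bP bP1 bQ bQ1 == F2one) || G16b (hof sx sy bP bP1 bQ bQ1).
Proof. by do 6 case; vm_compute. Qed.

Definition genl (s b : bool) : letter := (b, ~~ s).
Lemma gen_word s b : F2word (gen s b) = [:: genl s b].
Proof. by case: s; case: b. Qed.

Lemma tsetE x : tset x = [set act (gen (x F2one) false) x; act (gen (x F2one) true) x].
Proof. by rewrite /tset; case: (x F2one). Qed.

Lemma tsetP x z : tset x z -> exists b, z = act (gen (x F2one) b) x.
Proof. by rewrite tsetE => -[->|->]; [exists false|exists true]. Qed.

Lemma tset_gen x b : tset x (act (gen (x F2one) b) x).
Proof. by rewrite tsetE; case: b; [right|left]. Qed.

Definition orb (x : X) : set X := [set y | exists g, y = act g x].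

Definition pickX (S : set X) : X :=
  match pselect (exists y, S y) with
  | left p => proj1_sig (cid p)
  | right _ => fun _ => true
  end.

Lemma pickX_in (S : set X) : (exists y, S y) -> S (pickX S).
Proof.
rewrite /pickX; case: pselect => [p _|np H]; last by exfalso.
exact: (proj2_sig (cid p)).
Qed.

Definition rep (x : X) : X := pickX (orb x).

Lemma rep_orb x : exists a, rep x = act a x.
Proof. by apply: (pickX_in (S := orb x)); exists x, F2one; rewrite act1. Qed.

Lemma orb_act a x : orb (act a x) = orb x.
Proof.
apply/seteqP; split => y [g ->].
  by exists (F2mul g a); rewrite actA.
by exists (F2mul g (F2inv a)); rewrite actA F2mulA F2Vmul F2mulg1.
Qed.

Lemma rep_act a x : rep (act a x) = rep x.
Proof. by rewrite /rep orb_act. Qed.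

Lemma gof_ex x : exists g, act g (rep x) = x.
Proof. by have [a ->] := rep_orb x; exists (F2inv a); rewrite actK. Qed.

Definition gof x : F2 := proj1_sig (cid (gof_ex x)).
Lemma gofP x : act (gof x) (rep x) = x.
Proof. exact: (proj2_sig (cid (gof_ex x))). Qed.

Lemma rep_free x : Xfree x -> Xfree (rep x).
Proof. by move=> Hx; have [a ->] := rep_orb x; apply: xfree_act. Qed.

Definition fb x : bool := ohead (F2word (gof x)) == Some (linv (genl (x F2one) false)).
Definition fsel x : X := act (gen (x F2one) (fb x)) x.

Lemma fsel_mul x : F2word (F2mul (gen (x F2one) (fb x)) (gof x)) =
  genl (x F2one) (fb x) :: F2word (gof x).
Proof.
rewrite F2mulE gen_word /= red_id ?F2reduced //.
rewrite /fb; move: (F2word (gof x)) (x F2one) => w s.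
case: w => [|b w] //=.
case E: (Some b == Some (linv (genl s false))).
  move/eqP: E => [->]. by case: s.
have Hb : (b == linv (genl s false)) = false.
  by apply/negbTE; apply: contraFN E => /eqP ->.
by rewrite /= Hb.
Qed.

Lemma fsel_inj x y : Xfree x -> Xfree y -> fsel x = fsel y -> x = y.
Proof.
move=> Hx Hy E.
have Er : rep x = rep y by rewrite -(rep_act (gen (x F2one) (fb x)) x) -/(fsel x) E /fsel rep_act.
have Hr : Xfree (rep x) by apply: rep_free.
have E2 : act (F2mul (gen (x F2one) (fb x)) (gof x)) (rep x) =
          act (F2mul (gen (y F2one) (fb y)) (gof y)) (rep x).
  by rewrite -!actA Er !gofP -Er gofP.
have := f_equal F2word (xfree_uniq Hr E2).
rewrite !fsel_mul => /(congr1 behead) /= Ew; have Eg := F2_eq Ew.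
by rewrite -(gofP x) -(gofP y) -Er Eg.
Qed.

Lemma adj_rel x y u v z : Xfree x -> Xfree y ->
  tset x z -> tset y z -> tset x u -> tset y v -> u <> v ->
  exists h, G16 h /\ u = act h v.
Proof.
move=> Hx Hy /tsetP [bP ->] /tsetP [bQ Ez] /tsetP [bP1 ->] /tsetP [bQ1 ->] Huv.
set sx := x F2one in Ez Huv *; set sy := y F2one in Ez Huv *.
have Ex : x = act (F2inv (gen sx bP)) (act (gen sy bQ) y) by rewrite -Ez actK.
have E : act (gen sx bP1) x = act (hof sx sy bP bP1 bQ bQ1) (act (gen sy bQ1) y).
  rewrite {1}Ex /hof -!actA actK.
  by [].
have := check sx sy bP bP1 bQ bQ1; case/orP => [/eqP H1|/G16bP HG].
  by exfalso; apply: Huv; rewrite E H1 act1.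
by exists (hof sx sy bP bP1 bQ bQ1).
Qed.

Lemma rule_everywhere (kappa : X -> 'I_17)
  (hkappa : forall g, G16 g -> forall x, Xfree x -> kappa (act g x) <> kappa x) x :
  rule_at kappa (fun x => kappa (fsel x)) x.
Proof.
split.
  by move=> _; apply/mem_set; exists (fsel x) => //; apply: tset_gen.
move=> y [Hx [Hy [Hxy [z [Hzx Hzy]]]]] Ek.
have Huv : fsel x <> fsel y by move/(fsel_inj Hx Hy).
have [h [HG Eh]] := adj_rel Hx Hy Hzx Hzy (tset_gen x (fb x)) (tset_gen y (fb y)) Huv.
have Hv : Xfree (fsel y) by apply: xfree_act.
by apply: (hkappa h HG _ Hv); rewrite -Eh.
Qed.

Lemma part_a (R : realType) (m : {measure set Xm -> \bar R}) (kappa : X -> 'I_17)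
  (hkappa : forall g, G16 g -> forall x, Xfree x -> kappa (act g x) <> kappa x) :
  exists c, satisfies m kappa c.
Proof.
exists (fun x => kappa (fsel x)).
rewrite /satisfies.
have -> : [set x : Xm | ~ rule_at kappa (fun x => kappa (fsel x)) x] = set0.
  by apply/seteqP; split => x //= []; apply: rule_everywhere.
exact: negligible_set0.
Qed.


Lemma meas_pt (h : F2) (b : bool) : measurable [set x : Xm | x h = b].
Proof. by apply: sub_sigma_algebra; exists h, b. Qed.

Definition cylS (s : seq F2) (v : F2 -> bool) : set Xm :=
  [set x : Xm | forall h, List.In h s -> x h = v h].

Lemma meas_cyl s v : measurable (cylS s v).
Proof.
elim: s => [|a s IH].
  by have -> : cylS [::] v = setT by apply/seteqP; split => x //= _ h [].
have -> : cylS (a :: s) v = [set x : Xm | x a = v a] `&` cylS s v.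
  apply/seteqP; split => x /=.
    by move=> H; split; [apply: H; left | move=> h Hh; apply: H; right].
  by move=> [H1 H2] h [<-|Hh] //; apply: H2.
by apply: measurableI => //; apply: meas_pt.
Qed.

Lemma meas_eq2 (a b : F2) : measurable [set x : Xm | x a = x b].
Proof.
have -> : [set x : Xm | x a = x b] =
  ([set x : Xm | x a = true] `&` [set x : Xm | x b = true]) `|`
  ([set x : Xm | x a = false] `&` [set x : Xm | x b = false]).
  apply/seteqP; split => x /=.
    by case: (x a) => <-; [left|right].
  by case=> -[-> ->].
by apply: measurableU; apply: measurableI; apply: meas_pt.
Qed.

Definition pairS (L : seq (F2 * F2)) : set Xm :=
  [set x : Xm | forall ab, List.In ab L -> x ab.1 = x ab.2].

Fixpoint pl (L : seq (F2 * F2)) : seq F2 :=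
  if L is ab :: L' then ab.1 :: ab.2 :: pl L' else [::].

Lemma meas_pairS L : measurable (pairS L).
Proof.
elim: L => [|[a b] L IH].
  by have -> : pairS [::] = setT by apply/seteqP; split => x //= _ h [].
have -> : pairS ((a, b) :: L) = [set x : Xm | x a = x b] `&` pairS L.
  apply/seteqP; split => x /=.
    by move=> H; split; [apply: (H (a, b)); left | move=> h Hh; apply: H; right].
  by move=> [H1 H2] h [<-|Hh] //; apply: H2.
by apply: measurableI => //; apply: meas_eq2.
Qed.

Lemma In_mem (T : eqType) (x : T) s : List.In x s -> x \in s.
Proof. by elim: s => [|y s IH] //= [->|H]; rewrite inE ?eqxx // IH ?orbT. Qed.

Lemma uniq_NoDup (T : eqType) (s : seq T) : uniq s -> List.NoDup s.
Proof.
elim: s => [|x s IH] /=; first by constructor.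
case/andP => Hx Hs; constructor; last exact: IH.
by move/In_mem; apply/negP.
Qed.

From mathcomp Require Import ring lra zify.

Lemma pair_measure (R : realType) (m : {measure set Xm -> \bar R})
  (hm : is_uniform_product m) L : forall s v, uniq (pl L ++ s) ->
  m (pairS L `&` cylS s v) = ((2%:R ^- size L * 2%:R ^- size s : R))%:E.
Proof.
elim: L => [|[a b] L IH] s v Hu.
  have -> : pairS [::] `&` cylS s v = cylS s v.
    by apply/seteqP; split => x /=; [case | move=> H; split => // h []].
  by rewrite (hm s v (uniq_NoDup Hu)) /= expr0 invr1 mul1r.
have Hu' : uniq (pl L ++ [:: a, b & s]).
  have P : perm_eq ([:: a; b] ++ pl L ++ s) (pl L ++ [:: a, b & s]).
    by rewrite -(perm_catCA (pl L) [:: a; b] s) perm_refl.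
  by rewrite -(perm_uniq P).
move: Hu => /=; rewrite !inE !mem_cat !negb_or => /andP [/and3P [Hab Ha1 Ha2] /andP [/andP [Hb1 Hb2] _]].
pose vt (t : bool) := fun h => if (h == a) || (h == b) then t else v h.
have Hs : forall h, List.In h s -> vt true h = v h /\ vt false h = v h.
  move=> h /In_mem Hh; rewrite /vt.
  have -> : (h == a) = false by apply/negbTE; apply: contraNneq Ha2 => <-.
  have -> : (h == b) = false by apply/negbTE; apply: contraNneq Hb2 => <-.
  by [].
have -> : pairS ((a, b) :: L) `&` cylS s v =
   (pairS L `&` cylS [:: a, b & s] (vt true)) `|` (pairS L `&` cylS [:: a, b & s] (vt false)).
  apply/seteqP; split => x /=.
    move=> [H1 H2].
    have Eab : x a = x b by apply: (H1 (a, b)); left.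
    have HL : pairS L x by move=> ab Hab'; apply: H1; right.
    have Hc : forall t, x a = t -> cylS [:: a, b & s] (vt t) x.
      move=> t Ht h [<-|[<-|Hh]]; first by rewrite /vt eqxx.
        by rewrite /vt eqxx orbT -Eab.
      rewrite (H2 h Hh); case: (Hs h Hh) => E1 E2.
      by case: t {Ht}; [rewrite E1|rewrite E2].
    by case Exa : (x a); [left|right]; split => //; apply: Hc.
  case=> -[HL Hc]; (split; [move=> ab [<-|Hab']; [ |by apply: HL] |]).
  - by rewrite /= (Hc a (or_introl erefl)) (Hc b (or_intror (or_introl erefl))) /vt !eqxx ?orbT.
  - by move=> h Hh; rewrite (Hc h (or_intror (or_intror Hh))); case: (Hs h Hh).
  - by rewrite /= (Hc a (or_introl erefl)) (Hc b (or_intror (or_introl erefl))) /vt !eqxx ?orbT.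
  - by move=> h Hh; rewrite (Hc h (or_intror (or_intror Hh))); case: (Hs h Hh).
rewrite measureU; last 3 first.
- by apply: measurableI; [apply: meas_pairS | apply: meas_cyl].
- by apply: measurableI; [apply: meas_pairS | apply: meas_cyl].
- apply/seteqP; split => x //= [[_ H1] [_ H2]].
  by move: (H1 a (or_introl erefl)) (H2 a (or_introl erefl)); rewrite /vt eqxx /= => ->.
transitivity (((2%:R ^- size L * 2%:R ^- size [:: a, b & s] : R))%:E + ((2%:R ^- size L * 2%:R ^- size [:: a, b & s] : R))%:E); first by congr (_ + _); apply: IH.
rewrite -EFinD; congr (_%:E).
rewrite /= !exprS !invfM; field; by rewrite !expf_neq0 // (_ : 2 = 2%:R) // pnatr_eq0.
Qed.
Lemma small_pow2 (R : realType) (r : R) : (forall n, r <= 2%:R ^- n) -> r <= 0.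
Proof.
move=> H; rewrite leNgt; apply/negP => r0.
have Hb : r^-1 < (Num.bound r^-1)%:R by apply: archi_boundP; rewrite invr_ge0 ltW.
set n := Num.bound r^-1 in Hb.
have Hn : (n%:R : R) < 2%:R ^+ n by rewrite -natrX ltr_nat ltn_expl.
have H1 : r^-1 < 2%:R ^+ n by apply: lt_trans Hb Hn.
have := H n.
have p2 : (0 : R) < 2%:R ^+ n by apply: exprn_gt0.
rewrite -(ler_pM2r p2) mulVf ?gt_eqF //.
rewrite -(ltr_pM2l r0) mulfV ?gt_eqF // in H1.
by rewrite leNgt H1.
Qed.

Lemma neq_linv c : c != linv c.
Proof. by rewrite eq_sym linv_neq. Qed.

Lemma reduced_nseq_cat k c w : reduced (c :: w) -> reduced (nseq k c ++ c :: w).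
Proof.
elim: k => [|k IH] //= Hw.
by move: (IH Hw); case: k {IH} => [|k] /= H; rewrite H andbT neq_linv.
Qed.

Lemma reduced_nseq k c : reduced (nseq k c).
Proof.
by elim: k => [|k IH] //=; case: k IH => [|k] //= ->; rewrite andbT neq_linv.
Qed.

Definition pw (c : letter) (k : nat) : F2 := F2mk (nseq k c).

Lemma pw_word c k : F2word (pw c k) = nseq k c.
Proof. by rewrite /pw /= red_id // reduced_nseq. Qed.

Lemma pwg_word (g : F2) c w k : F2word g = c :: w ->
  F2word (F2mul (pw c k) g) = nseq k c ++ c :: w.
Proof.
move=> Hg; rewrite F2mulE pw_word Hg red_id //.
by apply: reduced_nseq_cat; rewrite -Hg F2reduced.
Qed.

Fixpoint Lf (g : F2) (c : letter) (M n : nat) : seq (F2 * F2) :=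
  if n is n'.+1 then (pw c (n' * M), F2mul (pw c (n' * M)) g) :: Lf g c M n' else [::].

Lemma Lf_size g c M n : size (Lf g c M n) = n.
Proof. by elim: n => //= n ->. Qed.

Lemma Lf_In g c M n ab : List.In ab (Lf g c M n) -> exists k, ab = (pw c k, F2mul (pw c k) g).
Proof.
elim: n => [|n IH] //= [<-|H]; first by exists (n * M)%N.
exact: IH.
Qed.

Lemma Lf_uniq g c w n : F2word g = c :: w ->
  uniq (pl (Lf g c (size w).+2 n)) /\
  (forall h, h \in pl (Lf g c (size w).+2 n) -> (F2len h < n * (size w).+2)%N).
Proof.
move=> Hg; elim: n => [|n [IHu IHl]] //=.
have La : F2len (pw c (n * (size w).+2)) = (n * (size w).+2)%N by rewrite /F2len pw_word size_nseq.
have Lb : F2len (F2mul (pw c (n * (size w).+2)) g) = (n * (size w).+2 + (size w).+1)%N.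
  by rewrite /F2len (pwg_word _ Hg) size_cat size_nseq.
split.
  rewrite IHu andbT inE negb_or -andbA; apply/and3P; split.
  - by apply/eqP => /(congr1 F2len); rewrite La Lb; lia.
  - by apply/negP => /IHl; rewrite La; lia.
  - by apply/negP => /IHl; rewrite Lb; lia.
move=> h; rewrite !inE => /orP [/eqP ->|/orP [/eqP ->|/IHl]].
- by rewrite La mulSn; lia.
- by rewrite Lb mulSn; lia.
- by rewrite mulSn; lia.
Qed.

Lemma fix_negligible (R : realType) (m : {measure set Xm -> \bar R})
  (hm : is_uniform_product m) (g : F2) : g <> F2one ->
  m.-negligible [set x : Xm | act g x = x].
Proof.
move=> Hg1; case Hw: (F2word g) => [|c w].
  by exfalso; apply: Hg1; apply: F2_eq; rewrite Hw.
have Hmeas : forall n, measurable (pairS (Lf g c (size w).+2 n)) by move=> n; apply: meas_pairS.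
exists (\bigcap_n pairS (Lf g c (size w).+2 n)); split.
- by apply: bigcapT_measurable.
- have H (n : nat) : (m (\bigcap_n pairS (Lf g c (size w).+2 n)) <= ((2%:R ^- n : R))%:E)%E.
    apply: (@le_trans _ _ (m (pairS (Lf g c (size w).+2 n)))).
      apply: le_measure; rewrite ?inE //; first exact: bigcapT_measurable.
      by move=> x Hx; apply: Hx.
    have -> : pairS (Lf g c (size w).+2 n) = pairS (Lf g c (size w).+2 n) `&` cylS [::] (fun _ => true).
      by apply/seteqP; split => x //=; [move=> H; split => // h [] | case].
    rewrite (pair_measure hm); last by rewrite cats0; case: (Lf_uniq n Hw).
    by rewrite Lf_size /= expr0 invr1 mulr1.
  have H0 := measure_ge0 m (\bigcap_n pairS (Lf g c (size w).+2 n)).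
  set B := \bigcap_n _ in H H0 *.
  have Hfin : m B \is a fin_num.
    by rewrite ge0_fin_numE // (le_lt_trans (H 0%N)) // ltry.
  have Hr : fine (m B) <= 0.
    by apply: small_pow2 => n; rewrite -lee_fin fineK.
  rewrite -(fineK Hfin); congr (_%:E).
  by apply/eqP; rewrite eq_le Hr fine_ge0.
  move=> x /= Hx n _ ab Hab; have [k ->] := Lf_In Hab; rewrite /= -{1}Hx.
  by [].
Qed.

Definition Efix (n : nat) : set Xm :=
  match (unpickle n : option (seq letter)) with
  | Some w => if (reduced w) && (w != [::]) then [set x : Xm | act (F2mk w) x = x] else set0
  | None => set0
  end.

Lemma nonfree_negligible (R : realType) (m : {measure set Xm -> \bar R})
  (hm : is_uniform_product m) : m.-negligible (~` Xfree : set Xm).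
Proof.
apply: (@negligibleS _ _ _ _ (\bigcup_n Efix n)).
  move=> x /= Hx.
  have [g Hg] : exists g, g <> F2one /\ act g x = x.
    apply: contrapT => H; apply: Hx => g Hg E; apply: H; by exists g.
  exists (pickle (F2word g)) => //.
  rewrite /Efix pickleK F2reduced /=.
  have -> : (F2word g != [::]) = true.
    apply/negP => /eqP E; case: Hg => Hg _; apply: Hg; apply: F2_eq; rewrite E.
    by [].
  have -> : F2mk (F2word g) = g by apply: F2_eq; rewrite /= red_id ?F2reduced.
  by case: Hg.
apply: negligible_bigcup => n; rewrite /Efix.
case: (unpickle n) => [w|]; last exact: negligible_set0.
case: ifP => [/andP [Hr Hn]|_]; last exact: negligible_set0.
apply: fix_negligible => // E.
by move: Hn; rewrite -(red_id Hr) -[red w]/(F2word (F2mk w)) E.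
Qed.



Lemma nnpp (P : Prop) : ~ ~ P -> P.
Proof. by move=> H; apply: contrapT. Qed.

Lemma mem_In (T : eqType) (x : T) s : x \in s -> List.In x s.
Proof. by elim: s => [|y s IH] //=; rewrite inE => /orP [/eqP ->|/IH]; [left|right]. Qed.

Definition Ufold (I : Type) (l : seq I) (F : I -> set X) : set X :=
  foldr (fun i acc => F i `|` acc) set0 l.

Lemma Ufold_in (I : eqType) (l : seq I) F x : Ufold l F x <-> exists i, i \in l /\ F i x.
Proof.
elim: l => [|i l IH] /=; first by split => // -[i []].
split.
  case=> [H|/IH [k [Hk H]]]; first by exists i; rewrite inE eqxx.
  by exists k; rewrite inE Hk orbT.
move=> [k [Hk H]]; move: Hk; rewrite inE => /orP [/eqP Ek|Hk].
  by left; rewrite -Ek.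
by right; apply/IH; exists k.
Qed.

Definition zs : seq F2 := [:: F2inv T1; F2inv T2; T1; T2].
Definition zv (h : F2) : bool := (h == T1) || (h == T2).

Lemma zs_gen s b : (F2inv (gen s b) \in zs) && (zv (F2inv (gen s b)) == ~~ s).
Proof. by case: s; case: b; vm_compute. Qed.

Lemma zs_uniq : uniq zs.
Proof. by vm_compute. Qed.

Lemma gen_G16 s : G16 (F2mul (gen s true) (F2inv (gen s false))).
Proof. by apply: G16bP; case: s; vm_compute. Qed.

Lemma gen_neq s : gen s true <> gen s false.
Proof. by move/(congr1 F2word); case: s; vm_compute. Qed.

Lemma part_b (R : realType) (m : {measure set Xm -> \bar R})
  (hm : is_uniform_product m)
  (kappa : X -> 'I_17)
  (hkappa_borel : forall j : 'I_17, measurable (Xfree `&` kappa @^-1` [set j] : set Xm))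
  (hkappa : forall g, G16 g -> forall x, Xfree x -> kappa (act g x) <> kappa x) :
  ~ (exists (Balg : set (set X)) (mu : set X -> R) (c : X -> 'I_17),
        good_extension m Balg mu /\ satisfies m kappa c /\
        (forall j : 'I_17, Balg (c @^-1` [set j]))).
Proof.
move=> [Balg [mu [c [hge [hsat hcol]]]]].
move: hge => [hT [hC [hU [hI [hM [h0 [h1 [hadd [hinv hext]]]]]]]]].
have hI2 : forall A B, Balg A -> Balg B -> Balg (A `&` B).
  move=> A B HA HB; rewrite -[A `&` B]setCK setCI.
  by apply: (hC); apply: (hU); apply: (hC).
have hset0 : Balg set0 by rewrite -setCT; apply: (hC).
have mu0 : mu set0 = 0.
  have := hadd set0 set0 hset0 hset0 (setI0 _); rewrite setU0 => H.
  lra.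
have hneg : forall A : set X, m.-negligible (A : set Xm) -> Balg A.
  move=> A HA; apply: (hM); exists set0; split => //.
  by apply: (negligibleS _ HA) => x /= [[]|[]].
have hneg0 : forall A : set X, m.-negligible (A : set Xm) -> mu A = 0.
  move=> A HA; have := hext A set0 measurable0.
  have -> : m set0 = 0%:E by rewrite measure0.
  move=> H.
  have HS : (symdiff A set0 : set Xm) `<=` (A : set Xm) by move=> x [[]|[]].
  by case: (H (negligibleS HS HA)).

have hmB : forall A : set X, measurable (A : set Xm) -> Balg A.
  move=> A HA; apply: (hM); exists A; split => //.
  have -> : symdiff A A = set0 by apply/seteqP; split => x // [[]|[]].
  exact: negligible_set0.
have hmE : forall A : set X, measurable (A : set Xm) -> (mu A)%:E = m A.
  move=> A HA; apply: (hext) => //.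
  have -> : symdiff A A = set0 by apply/seteqP; split => x // [[]|[]].
  exact: negligible_set0.
have mono : forall A B, Balg A -> Balg B -> A `<=` B -> mu A <= mu B.
  move=> A B HA HB AB.
  have -> : B = A `|` (B `&` ~` A).
    apply/seteqP; split => x.
      by move=> Hx; case: (pselect (A x)) => H; [left|right].
    by case=> [/AB|[]].
  rewrite hadd //; last 2 first.
  - by apply: (hI2) => //; apply: (hC).
  - by apply/seteqP; split => x // [H [_ H']].
  by rewrite lerDl h0 //; apply: (hI2) => //; apply: (hC).
pose N0 : set X := [set x | ~ rule_at kappa c x].
pose G : set X := Xfree `&` ~` N0.
have hXfree : Balg Xfree.
  apply: (hM); exists setT; split => //.
  apply: (negligibleS _ (nonfree_negligible hm)) => x /= [[_ []]|[_ H]] //.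
have hG : Balg G by apply: (hI2) => //; apply: (hC); apply: (hneg).
have muG : mu G = 1.
  have HnG : mu (~` G) = 0.
    apply: (hneg0).
    apply: (negligibleS _ (negligibleU (nonfree_negligible hm) hsat)).
    move=> x /= Hx; case: (pselect (Xfree x)) => H; [right|left] => //.
    by apply: contrapT => H'; apply: Hx; split.
  by rewrite -h1 -(setUv G) hadd //; [rewrite HnG addr0 | apply: (hC) | rewrite setICr].
pose K (j : 'I_17) : set X := Xfree `&` kappa @^-1` [set j].
pose piece (i : bool * bool * 'I_17) : set X :=
  G `&` [set x | x F2one = i.1.1] `&` c @^-1` [set i.2] `&`
  image_act (F2inv (gen i.1.1 i.1.2)) (K i.2).
pose img (i : bool * bool * 'I_17) : set X := image_act (gen i.1.1 i.1.2) (piece i).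
have hpiece : forall i, Balg (piece i).
  move=> [[s b] j]; apply: (hI2); last by apply: (hI); apply: (hmB); apply: hkappa_borel.
  apply: (hI2); last by apply: (hcol).
  by apply: (hI2) => //; apply: (hmB); apply: meas_pt.
have himg : forall i, Balg (img i) by move=> i; apply: (hI).
have piece_prop : forall s b j x, piece (s, b, j) x ->
    [/\ Xfree x, rule_at kappa c x, x F2one = s, c x = j & kappa (act (gen s b) x) = j].
  move=> s b j x [[[[Hx HN] Hs] Hc] [z [_ Hz] Ez]].
  split => //; first exact: nnpp.
  by rewrite -Ez actVK.
pose I := (bool * bool * 'I_17)%type.
have Ufold_B : forall (l : seq I) F, (forall i, Balg (F i)) -> Balg (Ufold l F).
  move=> l F HF; elim: l => [|i l IH] //=; exact: (hU).
have Ufold_mu : forall (l : seq I) F, uniq l -> (forall i, Balg (F i)) ->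
    (forall i j x, F i x -> F j x -> i = j) ->
    mu (Ufold l F) = \sum_(i <- l) mu (F i).
  move=> l F + HF Hd; elim: l => [|i l IH] /=; first by rewrite big_nil.
  case/andP => Hi Hl; rewrite big_cons -IH // hadd //; last 2 first.
  - exact: Ufold_B.
  - apply/seteqP; split => x // [H1 /Ufold_in [k [Hk H2]]].
    by move: Hi; rewrite (Hd _ _ _ H1 H2) Hk.
have idx_all : forall i : I, i \in enum {: I} by move=> i; rewrite mem_enum.
have HS1 : G = Ufold (enum {: I}) piece.
  apply/seteqP; split => x; last first.
    by move/Ufold_in => [[[s b] j] [_ [[[? _] _] _]]].
  move=> HG; apply/Ufold_in.
  have Hr : rule_at kappa c x by case: HG => _ H; exact: nnpp.
  have Hx : Xfree x by case: HG.
  have [Hl _] := Hr; move: (Hl Hx); rewrite inE => -[z Hz Ez].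
  have [b Ezb] := tsetP Hz.
  exists (x F2one, b, c x); split => //.
  split; [split; [split|] |] => //.
  exists z; last by rewrite Ezb actK.
  by split; [rewrite Ezb; apply: xfree_act | ].
have HS2 : forall i j x, piece i x -> piece j x -> i = j.
  move=> [[s b] k] [[s' b'] k'] x /piece_prop [Hx _ Hs Hc Hk] /piece_prop [_ _ Hs' Hc' Hk'].
  subst s s' k k'; congr (_, _, _).
  apply: contrapT => Hb.
  have Hgen : forall b1 b2, b1 <> b2 -> kappa (act (gen (x F2one) b1) x) = kappa (act (gen (x F2one) b2) x) -> False.
    move=> b1 b2 Hb12 E.
    have Hgx := @xfree_act (gen (x F2one) false) x Hx.
    have HE := hkappa _ (gen_G16 (x F2one)) _ Hgx.
    rewrite actA F2mulA F2Vmul F2mulg1 in HE.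
    by case: b1 b2 Hb12 E => [] [] H E; (try by case: (H erefl)); [exact: HE E | exact: HE (esym E)].
  by apply: (Hgen b b' Hb); rewrite Hk Hk'.
have HS3 : forall i j z, img i z -> img j z -> i = j.
  move=> [[s b] k] [[s' b'] k'] z [x Hxp Ex] [y Hyp Ey].
  have [Hx Hrx Hs Hc Hk] := piece_prop _ _ _ _ Hxp.
  have [Hy Hry Hs' Hc' Hk'] := piece_prop _ _ _ _ Hyp.
  simpl in Ex, Ey.
  case: (pselect (x = y)) => Exy.
    subst y.
    have Es : s' = s by rewrite -Hs' Hs.
    have Ek : k' = k by rewrite -Hc' Hc.
    rewrite Es Ek in Ey *; congr (_, _, _).
    apply: contrapT => Hb.
    have E2 := xfree_uniq Hx (etrans Ex (esym Ey)).
    by destruct b; destruct b'; [case: (Hb erefl) | exact: (gen_neq E2) | exact: (gen_neq (esym E2)) | case: (Hb erefl)].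
  exfalso.
  have Hadj : sec_adj x y.
    split => //; split => //; split => //; exists z; split.
    - by rewrite -Ex -Hs; apply: tset_gen.
    - by rewrite -Ey -Hs'; apply: tset_gen.
  have [_ Hr] := Hrx; apply: (Hr y Hadj).
  by rewrite Hc Hc' -Hk -Hk' Ex Ey.
pose Zc : set X := cylS zs zv.
have hZc : measurable (Zc : set Xm) by apply: meas_cyl.
have HS4 : forall i, img i `<=` ~` Zc.
  move=> [[s b] k] z [x Hxp <-] HZ.
  have [Hx _ Hs _ _] := piece_prop _ _ _ _ Hxp.
  have /andP [Hin /eqP Hv] := zs_gen s b.
  have := HZ _ (mem_In Hin); rewrite Hv /act F2Vmul Hs.
  by case: (s).
have muZc : mu Zc = 2%:R ^- 4.
  have := hmE Zc hZc; rewrite /Zc /cylS (hm zs zv (uniq_NoDup zs_uniq)) /=.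
  by case.
have muZ : mu (~` Zc) = 1 - 2%:R ^- 4.
  rewrite -muZc -h1.
  have -> : [set: X] = ~` Zc `|` Zc.
    by apply/seteqP; split => x // _; case: (pselect (Zc x)) => H; [right|left].
  rewrite hadd; [lra | apply: (hC); apply: (hmB) | apply: (hmB) | ] => //.
  by apply/seteqP; split => x // [].
have Hle : mu (Ufold (enum {: I}) img) <= mu (~` Zc).
  apply: (mono) => //; first exact: Ufold_B.
    by apply: (hC); apply: (hmB).
  by move=> z /Ufold_in [i [_ Hi]]; apply: HS4 Hi.
have Hsum : mu G = mu (Ufold (enum {: I}) img).
  rewrite HS1 !Ufold_mu ?enum_uniq //.
  by apply: eq_bigr => i _; rewrite /img hinv.
move: Hle; rewrite -Hsum muG muZ.
have : (0 : R) < 2%:R ^- 4 by rewrite invr_gt0 exprn_gt0.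
lra.
Qed.

Unset Implicit Arguments.

Theorem proposition4 (R : realType) (m : {measure set Xm -> \bar R})
  (hm : is_uniform_product m)
  (kappa : X -> 'I_17)
  (hkappa_borel : forall j : 'I_17, measurable (Xfree `&` kappa @^-1` [set j] : set Xm))
  (hkappa : forall g, G16 g -> forall x, Xfree x -> kappa (act g x) <> kappa x) :
  paradoxical m kappa.
Proof.
split; first exact: part_a.
exact: part_b.
Qed.
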